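(* Let $\ell\geq 2$ and $n=4\ell+2$. Then $\mathrm{capt}(H(n),3)=2\ell+3(n-4)$.
   Context: The graph $H(7)$ has vertex set $\{1,\dots,7\}$: vertices $6,2,1,4$ form a path $6-2-1-4$; vertices $3$ and $5$ are each adjacent to all of $6,2,1,4$ and not adjacent to each other; vertex $7$ is adjacent exactly to $6$, $4$ and $3$. For $n\geq 8$, $H(n)$ is obtained from $H(n-1)$ by adding vertex $n$ adjacent exactly to $n-1$, $n-3$ and $n-4$. All graphs are reflexive (every vertex is considered adjacent to itself). The game of $k$ cops and $m$ robbers on $G$: in round 0 the cops first choose starting vertices, then the robbers choose theirs. In each round $i\geq 1$, all cops move (each to an adjacent vertex or staying), then all robbers move likewise. Several players may occupy the same vertex. Whenever a cop and some robbers occupy the same vertex, those robbers are captured and take no further part in the game. Both sides have full information. The cops win if all robbers are captured after finitely many rounds. For a cop-win graph $G$, $\mathrm{capt}(G,m)$ is the index of the round in which the last robber is captured when one cop plays to minimize this index and $m$ robbers play to maximize it. ($H(n)$ is cop-win.) *)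

(* Defs.v *)
From mathcomp Require Import all_boot all_order.
Set Implicit Arguments. Unset Strict Implicit. Unset Printing Implicit Defensive.

(* Graph: vertex type T (finite), adjacency relation adj (assumed reflexive,
   i.e. staying put is a legal move; for H(n) below adjacency includes u = v). *)

(* A robber configuration is the list of positions of the robbers still in
   the game.  [robber_moves adj R R'] : each robber in R moves (or stays) to
   the corresponding position in R'. *)
Definition robber_moves (T : eqType) (adj : rel T) (R R' : seq T) : bool :=
  all2 adj R R'.

(* [cop_wins_within adj k c R] : it is the cop's turn to move, the cop is at c,
   the remaining robbers are at R (none at c); the cop can ensure that every
   remaining robber is captured within the next k rounds (a round = cop move
   then robbers' move; robbers on the cop's vertex are removed immediately). *)
Fixpoint cop_wins_within (T : eqType) (adj : rel T) (k : nat) (c : T) (R : seq T)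
  : Prop :=
  match k with
  | 0 => R = [::]
  | k'.+1 =>
      R = [::] \/
      exists2 c' : T, adj c c' &
        forall R'' : seq T,
          robber_moves adj [seq r <- R | r != c'] R'' ->
          cop_wins_within adj k' c' [seq r <- R'' | r != c']
  end.

(* Round 0: the cop picks a start vertex, then the m robbers pick theirs.
   [cop_guarantees adj m k] : the cop can force the last robber to be
   captured in a round of index at most k. *)
Definition cop_guarantees (T : eqType) (adj : rel T) (m k : nat) : Prop :=
  exists c0 : T, forall R0 : seq T, size R0 = m ->
    cop_wins_within adj k c0 [seq r <- R0 | r != c0].

(* capt(G, m) = k : the value of the game (min over cop, max over robbers of
   the round index in which the last robber is captured). *)
Definition capt_is (T : eqType) (adj : rel T) (m k : nat) : Prop :=
  cop_guarantees adj m k /\ forall j, j < k -> ~ cop_guarantees adj m j.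

(* [H_lt u v] for u < v : the edge {u,v} is present (in any H(n), n >= v). *)
Definition H_lt (u v : nat) : bool :=
  if v <= 7 then
    (u, v) \in [:: (1,2); (2,6); (1,4);
                   (3,6); (2,3); (1,3); (3,4);
                   (5,6); (2,5); (1,5); (4,5);
                   (6,7); (4,7); (3,7)]
  else [|| u == v - 1, u == v - 3 | u == v - 4].

Definition H_adj (u v : nat) : bool :=
  [|| u == v, (u < v) && H_lt u v | (v < u) && H_lt v u].

(* H(n) on the finite vertex type 'I_n, where i : 'I_n stands for label i+1. *)
Definition H (n : nat) : rel 'I_n := fun i j => H_adj i.+1 j.+1.
Arguments H n i j : clear implicits.

(* Main.v *)
Require Import Defs.
From mathcomp Require Import all_boot all_order.
From Stdlib Require Import ZArith Lia.

Local Open Scope Z_scope.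

Definition adjZ (u v : Z) : bool :=
  (u =? v) || (u + 1 =? v) || (v + 1 =? u) || (u + 3 =? v) || (v + 3 =? u) || (u + 4 =? v) || (v + 4 =? u)
  || ((u =? 1) && (v =? 3)) || ((u =? 3) && (v =? 1)).

Definition BZ n c := n - 4 + (c + 1) / 4.
Definition FZ n c r :=
 if r - c <=? -5 then BZ n c
 else if r - c <=? -3 then 1
 else if r - c <=? -2 then (if c <=? 3 then 1 else BZ n c)
 else if r - c <=? 1 then 1
 else if r - c <=? 2 then (if c <=? 1 then 1 else BZ n c)
 else if r - c <=? 4 then 1
 else if c <=? 1 then
   (if (r - c) mod 4 <=? 0 then n - 7 else if (r - c) mod 4 <=? 1 then n - 4
    else if (r - c) mod 4 <=? 2 then n - 5 else n - 6)
 else if (r - c) mod 4 <=? 0 then n - c - 6 else if (r - c) mod 4 <=? 1 then n - c - 3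
 else if (r - c) mod 4 <=? 2 then BZ n c else n - c - 5.

Definition sigmaZ (c r : Z) :=
 if r - c <=? -5 then (if c <=? 5 then 1 else c - 4)
 else if r - c <=? -3 then r
 else if r - c <=? -2 then (if c <=? 3 then r else if c <=? 5 then 1 else c - 4)
 else if r - c <=? 1 then r
 else if r - c <=? 2 then (if c <=? 1 then r else if c <=? 5 then 1 else c - 4)
 else if r - c <=? 4 then r
 else if (r - c) mod 4 <=? 0 then c + 4 else if (r - c) mod 4 <=? 1 then c + 1
 else if (r - c) mod 4 <=? 2 then (if c <=? 1 then c + 2 else if c <=? 5 then 1 else c - 4)
 else c + 3.

Lemma nonadj_region c r : 1 <= c -> 1 <= r -> adjZ c r = false ->
  r + 5 <= c \/ (r + 2 = c /\ 4 <= c) \/ (c + 2 = r /\ 2 <= c) \/ c + 5 <= r.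
Proof. unfold adjZ. intros. repeat rewrite Bool.orb_false_iff in *. repeat rewrite Bool.andb_false_iff in *. repeat rewrite Z.eqb_neq in *. lia. Qed.

Lemma adj_cases u v : adjZ u v = true ->
  v = u \/ v = u + 1 \/ v + 1 = u \/ v = u + 3 \/ v + 3 = u \/ v = u + 4 \/ v + 4 = u
    \/ (u = 1 /\ v = 3) \/ (u = 3 /\ v = 1).
Proof. unfold adjZ. intros H. repeat rewrite Bool.orb_true_iff in H. repeat rewrite Bool.andb_true_iff in H. repeat rewrite Z.eqb_eq in H. lia. Qed.

Ltac splitif := match goal with
  | |- context [if (?x <=? ?y) then _ else _] => destruct (Z.leb_spec x y)
  end.
Ltac zl := Z.to_euclidean_division_equations; lia.
Ltac zl_old := Z.to_euclidean_division_equations; lia.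
Ltac prune := try (exfalso; lia).
Ltac splitif2 := match goal with
  | |- context [if (?x <=? ?y) then _ else _] =>
    first [ let HH := fresh in assert (HH : (x <=? y) = true) by (apply Z.leb_le; lia); rewrite HH; clear HH
          | let HH := fresh in assert (HH : (x <=? y) = false) by (apply Z.leb_gt; lia); rewrite HH; clear HH
          | destruct (Z.leb_spec x y) ]
  end.
Ltac crushL := repeat splitif2; zl.
Ltac crush := unfold sigmaZ; repeat splitif2; unfold FZ, BZ; crushL.

Lemma sigma_ok l n c r r' : n = 4 * l + 2 -> 2 <= l -> 1 <= c <= n -> 1 <= r <= n ->
  1 <= r' <= n -> adjZ c r = false -> adjZ r r' = true -> FZ n (sigmaZ c r) r' < FZ n c r.
Proof.
intros ? ? ? ? ? H H'. apply nonadj_region in H; try lia. apply adj_cases in H'.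
repeat match goal with HH : _ \/ _ |- _ => destruct HH end; crush.
Qed.

Definition rhoZ (n r c' : Z) :=
  if c' <=? 1 then
    (if r mod 4 <=? 0 then (if r <=? 7 then r + 3 else r - 1)
     else if r mod 4 <=? 1 then r + 1
     else if r mod 4 <=? 2 then (if r <=? 5 then r + 4 else r)
     else (if r <=? 6 then r + 3 else r - 1))
  else if r - c' <=? -5 then r
  else if r - c' <=? -4 then (if r <=? 1 then 3 else r - 1)
  else if r - c' <=? -3 then r + 1
  else if r - c' <=? -2 then (if r <=? 1 then 5 else r)
  else if r - c' <=? -1 then (if c' <=? 2 then 4 else if c' <=? 3 then 5 else r - 1)
  else if r - c' <=? 0 then r
  else if (r - c') mod 4 <=? 1 then (if n <=? r then r - 3 else r + 1)
  else if (r - c') mod 4 <=? 2 then r else r - 1.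

Lemma adjZ_true u v : adjZ u v = true <->
  (v = u \/ v = u + 1 \/ v + 1 = u \/ v = u + 3 \/ v + 3 = u \/ v = u + 4 \/ v + 4 = u
    \/ (u = 1 /\ v = 3) \/ (u = 3 /\ v = 1)).
Proof. unfold adjZ. repeat rewrite Bool.orb_true_iff. repeat rewrite Bool.andb_true_iff. repeat rewrite Z.eqb_eq. lia. Qed.

Lemma adjZ_false u v : adjZ u v = false <->
  (v <> u /\ v <> u + 1 /\ v + 1 <> u /\ v <> u + 3 /\ v + 3 <> u /\ v <> u + 4 /\ v + 4 <> u
    /\ ~(u = 1 /\ v = 3) /\ ~ (u = 3 /\ v = 1)).
Proof. unfold adjZ. repeat rewrite Bool.orb_false_iff. repeat rewrite Bool.andb_false_iff. repeat rewrite Z.eqb_neq. lia. Qed.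

Lemma rho_ok l n c r c' : n = 4 * l + 2 -> 2 <= l -> 1 <= c <= n -> 1 <= r <= n ->
  1 <= c' <= n -> adjZ c r = false -> adjZ c c' = true -> ~ (c' = n - 4 /\ r = n) ->
  (1 <= rhoZ n r c' <= n /\ adjZ r (rhoZ n r c') = true /\ adjZ c' (rhoZ n r c') = false)
  /\ FZ n c r <= FZ n c' (rhoZ n r c') + 1.
Proof.
intros ? ? ? ? ? H H' ?. apply nonadj_region in H; try lia. apply adj_cases in H'.
setoid_rewrite adjZ_true; setoid_rewrite adjZ_false.
repeat match goal with HH : _ \/ _ |- _ => destruct HH end;
 unfold rhoZ; repeat splitif2; (split; [zl| unfold FZ, BZ; crushL]).
Qed.

Lemma FZ_ge1 l n c r : n = 4 * l + 2 -> 2 <= l -> 1 <= c <= n -> 1 <= r <= n -> 1 <= FZ n c r.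
Proof. intros. unfold FZ, BZ; crushL. Qed.

Lemma FZ_ge2 l n c r : n = 4 * l + 2 -> 2 <= l -> 1 <= c <= n -> 1 <= r <= n ->
  adjZ c r = false -> 2 <= FZ n c r.
Proof.
intros ? ? ? ? H. apply nonadj_region in H; try lia.
repeat match goal with HH : _ \/ _ |- _ => destruct HH end; unfold FZ, BZ; crushL.
Qed.

Lemma sigma_adj l n c r : n = 4 * l + 2 -> 2 <= l -> 1 <= c <= n -> 1 <= r <= n ->
  adjZ c r = false -> 1 <= sigmaZ c r <= n /\ adjZ c (sigmaZ c r) = true.
Proof.
intros ? ? ? ? H. apply nonadj_region in H; try lia. setoid_rewrite adjZ_true.
repeat match goal with HH : _ \/ _ |- _ => destruct HH end; unfold sigmaZ; crushL.
Qed.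

Lemma FZ_home l n r : n = 4 * l + 2 -> 2 <= l -> 1 <= r <= n ->
  FZ n 1 r <= n - 4 /\ FZ n 2 r <= n - 4.
Proof. intros. split; unfold FZ, BZ; crushL. Qed.

Lemma FZ_start l n c : n = 4 * l + 2 -> 2 <= l -> 1 <= c <= n ->
  let r0 := (if c <=? 1 then 6 else if c + 2 <=? n then c + 2 else c - 2) in
  1 <= r0 <= n /\ adjZ c r0 = false /\ n - 4 <= FZ n c r0.
Proof. intros. subst r0. setoid_rewrite adjZ_false. repeat splitif2; (split; [zl|split; [zl|unfold FZ, BZ; crushL]]). Qed.

Lemma FZ_trap l n c : n = 4 * l + 2 -> 2 <= l -> 1 <= c <= n ->
  adjZ c (n - 4) = true -> adjZ c n = false -> FZ n c n <= 2.
Proof.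
intros ? ? ? H H'. apply adjZ_true in H. apply adjZ_false in H'.
repeat match goal with HH : _ \/ _ |- _ => destruct HH end; unfold FZ, BZ; crushL.
Qed.

Lemma FZ_spec l n : n = 4 * l + 2 -> 2 <= l ->
  FZ n (n - 8) n = 2 /\ FZ n (n - 7) n = 2 /\ FZ n (n - 5) n = 2 /\
  FZ n (n - 3) (n - 1) = n - 4 + l /\ FZ n (n - 1) (n - 3) = n - 4 + l /\
  FZ n n (n - 2) = n - 4 + l /\ FZ n (n - 8) (n - 2) = n - 6 + l /\
  FZ n (n - 7) (n - 2) = 4 /\ FZ n (n - 4) (n - 2) = n - 5 + l.
Proof. intros. repeat split; unfold FZ, BZ; crushL. Qed.

Local Close Scope Z_scope.

From mathcomp Require Import zify.
Set Implicit Arguments. Unset Strict Implicit. Unset Printing Implicit Defensive.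

Notation cww := cop_wins_within.

Lemma cww_mono (T : eqType) (a : rel T) k c R : cww a k c R -> cww a k.+1 c R.
Proof.
elim: k c R => [|k IH] c R /=; first by move=> ->; left.
case=> [->|[c' Hc' H]]; first by left.
right; exists c' => // R'' HR; apply: IH; exact: H.
Qed.

Lemma cww_monoN (T : eqType) (a : rel T) k k' c R : k <= k' -> cww a k c R -> cww a k' c R.
Proof.
elim: k' => [|k' IH]; first by rewrite leqn0 => /eqP ->.
rewrite leq_eqVlt => /orP [/eqP -> //|Hk H]; apply: cww_mono; exact: IH.
Qed.

Lemma cww_nil (T : eqType) (a : rel T) k c : cww a k c [::].
Proof. by case: k => [|k] /=; [|left]. Qed.

Fixpoint chase (T : eqType) (a : rel T) (k : nat) (c r : T) : Prop :=
  match k with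
  | 0 => False
  | k'.+1 => exists2 c', a c c' & (c' = r \/ forall r', a r r' -> r' = c' \/ chase a k' c' r')
  end.


Lemma chase_mono (T : eqType) (a : rel T) k c r : chase a k c r -> chase a k.+1 c r.
Proof.
elim: k c r => [|k IH] c r //= [c' Hc' [Hcr|H]]; exists c' => //; first by left.
right=> r' Hr'; case: (H r' Hr') => [->|Hk]; [by left|right; exact: IH].
Qed.

Lemma chase_monoN (T : eqType) (a : rel T) k k' c r : k <= k' -> chase a k c r -> chase a k' c r.
Proof.
elim: k' => [|k' IH]; first by rewrite leqn0 => /eqP ->.
rewrite leq_eqVlt => /orP [/eqP -> //|Hk H]; apply: chase_mono; exact: IH.
Qed.

Lemma all2_mem (T : eqType) (a : rel T) s t x :
  all2 a s t -> x \in s -> exists2 y, y \in t & a x y.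
Proof.
elim: s t => [|y s IH] [|z t] //=; case/andP=> Hyz Hst.
rewrite in_cons => /orP [/eqP ->|Hx]; first by exists z; rewrite ?mem_head.
by case: (IH t Hst Hx) => w Hw Hxw; exists w => //; rewrite in_cons Hw orbT.
Qed.

Lemma all2_size (T : eqType) (a : rel T) s t : all2 a s t -> size s = size t.
Proof. by elim: s t => [|y s IH] [|z t] //= /andP [_ /IH ->]. Qed.

Lemma all2_all (T : eqType) (a : rel T) (p : pred T) s t :
  (forall x y, a x y -> p y) -> all2 a s t -> all p t.
Proof. move=> Hp; elim: s t => [|y s IH] [|z t] //= /andP [/Hp -> /IH ->]. by []. Qed.

Lemma size_filter_lt (T : eqType) (s : seq T) x :
  x \in s -> size [seq y <- s | y != x] < size s.
Proof.
move=> Hx; rewrite size_filter.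
have H1 := count_predC (fun y => y != x) s.
have : 0 < count (predC (fun y => y != x)) s.
  by rewrite -has_count; apply/hasP; exists x => //=; rewrite negbK.
lia.
Qed.

Lemma size_filter_le (T : eqType) (s : seq T) (p : pred T) : size (filter p s) <= size s.
Proof. by rewrite size_filter count_size. Qed.

Lemma chase_multi (T : eqType) (a : rel T) (inv : T -> seq T -> Prop) k K c r R :
  chase a k c r -> r \in R ->
  (forall c0 c' R0 R'', inv c0 R0 -> a c0 c' -> all2 a [seq x <- R0 | x != c'] R'' ->
       inv c' [seq x <- R'' | x != c']) ->
  inv c R ->
  (forall c' R', size R' < size R -> inv c' R' -> cww a K c' R') ->
  cww a (k + K) c R.
Proof.
elim: k c r R => [|k IH] c r R //= [c' Hcc' Hch] HrR Hinv HI HK.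
right; exists c' => // R'' HR''.
set R3 := [seq x <- R'' | x != c'].
have HI3 : inv c' R3 by exact: (Hinv c c' R R'' HI Hcc' HR'').
have Hs1 : size R3 <= size R.
  apply: leq_trans (size_filter_le _ _) _; rewrite -(all2_size HR''); exact: size_filter_le.
have Hlt : size R3 < size R -> cww a (k + K) c' R3.
  move=> Hl; apply: (cww_monoN (leq_addl k K)); exact: HK.
case: Hch => [Hc'r|Hch].
  apply: Hlt; subst c'.
  apply: leq_ltn_trans (size_filter_le _ _) _; rewrite -(all2_size HR''); exact: size_filter_lt.
case: (eqVneq r c') => [Hrc'|Hrc'].
  apply: Hlt; subst c'.
  apply: leq_ltn_trans (size_filter_le _ _) _; rewrite -(all2_size HR''); exact: size_filter_lt.
have Hr1 : r \in [seq x <- R | x != c'] by rewrite mem_filter Hrc'.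
case: (all2_mem HR'' Hr1) => r' Hr'R Har.
case: (eqVneq r' c') => [Hr'c'|Hr'c'].
  apply: Hlt; subst r'.
  apply: leq_trans (size_filter_lt Hr'R) _; rewrite -(all2_size HR''); exact: size_filter_le.
case: (Hch r' Har) => [E|Hk]; first by rewrite E eqxx in Hr'c'.
apply: (IH c' r' R3 Hk) => //; first by rewrite mem_filter Hr'R Hr'c'.
move=> c1 R1 Hs Hi; apply: HK => //; exact: leq_trans Hs Hs1.
Qed.
Ltac bsplit := repeat (apply/andP; split).

Definition adjB (n : nat) : rel nat :=
  fun u v => [&& 0 < u <= n, 0 < v <= n & adjZ (Z.of_nat u) (Z.of_nat v)].

Definition Fn (n c r : nat) : nat := Z.to_nat (FZ (Z.of_nat n) (Z.of_nat c) (Z.of_nat r)).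

Lemma chase_F l n k c r : n = 4 * l + 2 -> 2 <= l -> 0 < c <= n -> 0 < r <= n -> c != r ->
  Fn n c r <= k -> chase (adjB n) k c r.
Proof.
move=> Hn Hl; have HnZ : Z.of_nat n = (4 * Z.of_nat l + 2)%Z by lia.
have HlZ : (2 <= Z.of_nat l)%Z by lia.
elim: k c r => [|k IH] c r Hc Hr Hcr Hk.
  have := FZ_ge1 (Z.of_nat l) (Z.of_nat n) (Z.of_nat c) (Z.of_nat r) HnZ HlZ (ltac:(lia)) (ltac:(lia)); rewrite /Fn in Hk; lia.
case Ha: (adjZ (Z.of_nat c) (Z.of_nat r)).
  by exists r; [rewrite /adjB Ha andbT; bsplit; lia|left].
have [Hs1 Hs2] := sigma_adj (Z.of_nat l) (Z.of_nat n) (Z.of_nat c) (Z.of_nat r) HnZ HlZ (ltac:(lia)) (ltac:(lia)) Ha.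
exists (Z.to_nat (sigmaZ (Z.of_nat c) (Z.of_nat r))).
  by rewrite /adjB Z2Nat.id ?Hs2 ?andbT; lia.
right=> r' /andP [_ /andP [Hr' Har]].
case: (eqVneq r' (Z.to_nat (sigmaZ (Z.of_nat c) (Z.of_nat r)))) => [->|Hne]; first by left.
right; apply: IH => //; first lia; first by rewrite eq_sym.
have := sigma_ok (Z.of_nat l) (Z.of_nat n) (Z.of_nat c) (Z.of_nat r) (Z.of_nat r') HnZ HlZ (ltac:(lia)) (ltac:(lia)) (ltac:(lia)) Ha Har.
have := FZ_ge1 (Z.of_nat l) (Z.of_nat n) (Z.of_nat (Z.to_nat (sigmaZ (Z.of_nat c) (Z.of_nat r)))) (Z.of_nat r') HnZ HlZ (ltac:(lia)) (ltac:(lia)).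
rewrite /Fn Z2Nat.id in Hk * ; lia.
Qed.

Lemma H_adjZ u v : 0 < u -> 0 < v -> H_adj u v = adjZ (Z.of_nat u) (Z.of_nat v).
Proof.
move=> Hu Hv.
case: (leqP v 7) => Hv'; case: (leqP u 7) => Hu'.
- have Hall : all (fun u => all (fun v => H_adj u v == adjZ (Z.of_nat u) (Z.of_nat v)) (iota 1 7)) (iota 1 7)
    by vm_compute.
  have Hu1 : u \in iota 1 7 by rewrite mem_iota; lia.
  have Hv1 : v \in iota 1 7 by rewrite mem_iota; lia.
  move/allP: Hall => Hall. move: (Hall u Hu1) => /allP H2. by move: (H2 v Hv1) => /eqP.
- rewrite /H_adj /H_lt. have -> : (u < v) = false by lia. rewrite andFb /=.
  have -> : (u <= 7) = false by lia.
  apply/idP/idP => H; [apply adjZ_true | move/adjZ_true: H => H]; lia.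
- rewrite /H_adj /H_lt. have -> : (v < u) = false by lia. rewrite andFb /= orbF.
  have -> : (v <= 7) = false by lia.
  apply/idP/idP => H; [apply adjZ_true | move/adjZ_true: H => H]; lia.
- rewrite /H_adj /H_lt. have -> : (v <= 7) = false by lia. have -> : (u <= 7) = false by lia.
  apply/idP/idP => H; [apply adjZ_true | move/adjZ_true: H => H]; lia.
Qed.

Lemma H_lab n (i j : 'I_n) : H n i j = adjB n i.+1 j.+1.
Proof.
rewrite /H /adjB H_adjZ //.
have := ltn_ord i; have := ltn_ord j => ? ?.
have -> : 0 < i.+1 <= n by lia.
by have -> : 0 < j.+1 <= n by lia.
Qed.

Definition lab n (i : 'I_n) : nat := i.+1.

Lemma filter_lab n (R : seq 'I_n) (c : 'I_n) :
  [seq x <- map (@lab n) R | x != c.+1] = map (@lab n) [seq x <- R | x != c].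
Proof. by elim: R => [|x R IH] //=; rewrite eqSS; case: ifP => _ //=; rewrite IH. Qed.

Lemma all2_lab n (s t : seq 'I_n) :
  all2 (adjB n) (map (@lab n) s) (map (@lab n) t) = all2 (H n) s t.
Proof. by elim: s t => [|x s IH] [|y t] //=; rewrite IH H_lab. Qed.

Lemma adjB_range n u v : adjB n u v -> (0 < v <= n) && (0 < u <= n).
Proof. by case/and3P => -> -> _. Qed.

Lemma lab_inv n (x0 : 'I_n) (t : seq nat) : all (fun v => 0 < v <= n) t ->
  t = map (@lab n) (map (fun v => insubd x0 v.-1) t).
Proof.
elim: t => [|v t IH] //= /andP [Hv Ht]; rewrite -(IH Ht); congr (_ :: _).
rewrite /lab val_insubd; have -> : v.-1 < n by lia. lia.
Qed.

Lemma transfer n k (c : 'I_n) (R : seq 'I_n) :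
  cww (H n) k c R <-> cww (adjB n) k c.+1 (map (@lab n) R).
Proof.
elim: k c R => [|k IH] c R /=.
  by split; [move->|case: R].
split.
- case=> [->|[c' Hc' HR]]; first by left.
  right; exists c'.+1; first by rewrite -H_lab.
  move=> t; rewrite filter_lab => Ht.
  have Htr : all (fun v => 0 < v <= n) t.
    by apply: (all2_all _ Ht) => x y /adjB_range /andP [].
  rewrite (lab_inv c Htr) filter_lab; apply/IH; apply: HR.
  by rewrite /robber_moves -all2_lab -(lab_inv c Htr).
- case=> [HR|[c'n Hc' HR]]; first by left; case: R HR.
  have /andP [Hc'r _] := adjB_range Hc'.
  set c' : 'I_n := insubd c c'n.-1.
  have Ec' : c'.+1 = c'n.
    rewrite /c' val_insubd. have -> : c'n.-1 < n by lia. lia.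
  right; exists c'; first by rewrite H_lab Ec'.
  move=> R'' HR''; apply/IH; rewrite -filter_lab Ec'; apply: HR.
  by rewrite /robber_moves -Ec' filter_lab all2_lab.
Qed.

Definition wf n c (R : seq nat) := (0 < c <= n) /\ all (fun x => (x != c) && (0 < x <= n)) R.

Lemma wf_step n c c' R R'' : adjB n c c' -> all2 (adjB n) [seq x <- R | x != c'] R'' ->
  wf n c' [seq x <- R'' | x != c'].
Proof.
move=> Hc HR; split; first by case/andP: (adjB_range Hc).
rewrite all_filter; apply/allP => x Hx; apply/implyP => ->.
have := all2_all (p := fun v => 0 < v <= n) _ HR.
move=> /(_ (fun u v H => proj1 (andP (adjB_range H)))) /allP /(_ x Hx) //.
Qed.

Lemma walk l n d X p R : n = 4 * l + 2 -> 0 < p <= n -> p.+1 %/ 4 <= d ->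
  (forall h R', (h == 1) || (h == 2) -> size R' <= size R -> wf n h R' -> cww (adjB n) X h R') ->
  wf n p R -> cww (adjB n) (d + X) p R.
Proof.
move=> Hn; elim: d p R => [|d IH] p R Hp Hd Hh Hw.
  by apply: Hh => //; lia.
case: (leqP p 2) => Hp2.
  by apply: (cww_monoN (leq_addl _ _)); apply: Hh => //; lia.
rewrite addSn /=; right.
exists (if p <= 5 then 1 else p - 4).
  rewrite /adjB; case: ifP => H5; (apply/andP; split; [lia|apply/andP; split; [lia|]]);
  apply/adjZ_true; lia.
move=> R'' HR''; apply: IH.
- case: ifP; lia.
- case: ifP; lia.
- move=> h R' Hh' Hs Hw'; apply: Hh => //; apply: leq_trans Hs _.
  apply: leq_trans (size_filter_le _ _) _; rewrite -(all2_size HR''); exact: size_filter_le.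
- apply: (@wf_step n p _ R R'') HR''; rewrite /adjB; case: ifP => H5;
  (apply/andP; split; [lia|apply/andP; split; [lia|]]); apply/adjZ_true; lia.
Qed.

Lemma UB_chase l n h r R0 : n = 4 * l + 2 -> 2 <= l -> (h == 1) || (h == 2) ->
  wf n h (r :: R0) -> chase (adjB n) (n - 4) h r.
Proof.
move=> Hn Hl Hh [Hh1 /andP [/andP [Hrh Hr] _]].
have HnZ : Z.of_nat n = (4 * Z.of_nat l + 2)%Z by lia.
have HlZ : (2 <= Z.of_nat l)%Z by lia.
apply: (chase_F Hn Hl) => //; first by rewrite eq_sym.
have [H1 H2] := FZ_home (Z.of_nat l) (Z.of_nat n) (Z.of_nat r) HnZ HlZ (ltac:(lia)).
rewrite /Fn; case/orP: Hh => /eqP E; rewrite E; [change (Z.of_nat 1) with 1%Z | change (Z.of_nat 2) with 2%Z]; lia.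
Qed.

Lemma UB l n j h R : n = 4 * l + 2 -> 2 <= l -> (h == 1) || (h == 2) -> size R <= j.+1 ->
  wf n h R -> cww (adjB n) ((n - 4) + j * (l + (n - 4))) h R.
Proof.
move=> Hn Hl.
elim: j h R => [|j IH] h R Hh HsR Hw; (case: R HsR Hw => [|r R0] HsR Hw; first exact: cww_nil);
  have Hch := UB_chase Hn Hl Hh Hw;
  apply: (chase_multi (inv := wf n) Hch (mem_head _ _)) => //;
  try (move=> c0 c' R1 R'' _; exact: wf_step).
- move=> c' R' Hs _; have -> : R' = [::] by case: R' Hs => //= x R1 Hs; simpl in HsR; lia.
  exact: cww_nil.
- move=> c' R' Hs Hw'; rewrite mulSn.
  have -> : l + (n - 4) + j * (l + (n - 4)) = l + ((n - 4) + j * (l + (n - 4))) by lia.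
  case: (Hw') => Hc' _.
  apply: (walk (l := l) Hn) => //; first lia.
  move=> h' R'' Hh' Hs' Hw''; apply: IH => //; simpl in HsR, Hs; lia.
Qed.

Lemma all2_nseq (T : eqType) (a : rel T) j x y : all2 a (nseq j x) (nseq j y) = (j == 0) || a x y.
Proof. by elim: j => [|j IH] //=; rewrite IH; case: (a x y); rewrite ?andbT ?andbF; case: j {IH}. Qed.

Lemma filter_nseqT (T : eqType) j (x c : T) : x != c -> [seq y <- nseq j x | y != c] = nseq j x.
Proof. by move=> H; elim: j => [|j IH] //=; rewrite H IH. Qed.

Ltac fsimp := rewrite /=; repeat (match goal with |- context [if ?b then _ else _] =>
   (have -> : b = true by lia) || (have -> : b = false by lia) end).

Ltac adjsolve := rewrite /robber_moves /= /adjB ?andbT; bsplit; try lia; apply/adjZ_true; lia.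

Lemma Zadj_cases_nat u v : adjZ (Z.of_nat u) (Z.of_nat v) = true ->
  v = u \/ v = u + 1 \/ v + 1 = u \/ v = u + 3 \/ v + 3 = u \/ v = u + 4 \/ v + 4 = u
    \/ (u = 1 /\ v = 3) \/ (u = 3 /\ v = 1).
Proof. move/adj_cases; lia. Qed.

Lemma Fn_spec l n : n = 4 * l + 2 -> 2 <= l ->
  Fn n (n - 8) n = 2 /\ Fn n (n - 7) n = 2 /\ Fn n (n - 5) n = 2 /\
  Fn n (n - 3) (n - 1) = n - 4 + l /\ Fn n (n - 1) (n - 3) = n - 4 + l /\
  Fn n n (n - 2) = n - 4 + l /\ Fn n (n - 8) (n - 2) = n - 6 + l /\
  Fn n (n - 7) (n - 2) = 4 /\ Fn n (n - 4) (n - 2) = n - 5 + l.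
Proof.
move=> Hn Hl; have HnZ : Z.of_nat n = (4 * Z.of_nat l + 2)%Z by lia.
have HlZ : (2 <= Z.of_nat l)%Z by lia.
have Hsp := FZ_spec (Z.of_nat l) (Z.of_nat n) HnZ HlZ.
have E8 : Z.of_nat (n - 8) = (Z.of_nat n - 8)%Z by lia.
have E7 : Z.of_nat (n - 7) = (Z.of_nat n - 7)%Z by lia.
have E5 : Z.of_nat (n - 5) = (Z.of_nat n - 5)%Z by lia.
have E4 : Z.of_nat (n - 4) = (Z.of_nat n - 4)%Z by lia.
have E3 : Z.of_nat (n - 3) = (Z.of_nat n - 3)%Z by lia.
have E2 : Z.of_nat (n - 2) = (Z.of_nat n - 2)%Z by lia.
have E1 : Z.of_nat (n - 1) = (Z.of_nat n - 1)%Z by lia.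
rewrite /Fn E8 E7 E5 E4 E3 E2 E1.
case: Hsp => [-> [-> [-> [-> [-> [-> [-> [-> ->]]]]]]]].
repeat split; lia.
Qed.

Lemma LB l n k : n = 4 * l + 2 -> 2 <= l ->
  (forall c j r, 0 < c <= n -> 0 < r <= n -> adjZ (Z.of_nat c) (Z.of_nat r) = false -> 0 < j <= 3 ->
      k < Fn n c r + (j - 1) * (n - 4 + l) -> ~ cww (adjB n) k c (nseq j r))
  /\ (k < 1 + 2 * (n - 4 + l) -> ~ cww (adjB n) k (n - 4) [:: n - 3; n - 1; n])
  /\ (k < 1 + (n - 4 + l) -> ~ cww (adjB n) k (n - 4) [:: n - 3; n - 1])
  /\ (k < 1 -> ~ cww (adjB n) k (n - 4) [:: n - 3]).
Proof.
move=> Hn Hl; have HnZ : Z.of_nat n = (4 * Z.of_nat l + 2)%Z by lia.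
have HlZ : (2 <= Z.of_nat l)%Z by lia.
have Hsp := FZ_spec (Z.of_nat l) (Z.of_nat n) HnZ HlZ.
elim: k => [|k [IHp [IH3 [IH2 IH1]]]].
  split; first by move=> c [|j] r //= *.
  by do 2 (split; first by []).
split; last split; last split.
-
  move=> c j r Hc Hr Ha Hj Hk /= [Hnil|[c' Hc' HR]]; first by case: j Hj Hk Hnil.
  have /andP [Hc'r _] := adjB_range Hc'.
  case/and3P: Hc' => _ _ Hcc'.
  have Hrc' : r != c'.
    apply/eqP => E; rewrite E Hcc' in Ha; discriminate.
  move: HR; rewrite filter_nseqT // => HR.
  case: (boolP ((c' == n - 4) && (r == n))) => [/andP [/eqP Ec' /eqP Er]|Htrap].
  + subst c' r.
    have Ftr := FZ_trap (Z.of_nat l) (Z.of_nat n) (Z.of_nat c) HnZ HlZ (ltac:(lia)).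
    have : Fn n c n <= 2.
      have E : Z.of_nat (n - 4) = (Z.of_nat n - 4)%Z by lia.
      rewrite E in Hcc'; have := Ftr Hcc' Ha; rewrite /Fn; lia.
    move=> Fle.
    case: j Hj Hk HR => [|[|[|[|j]]]] // Hj Hk HR.
    * apply: (IH1 (ltac:(lia))); move: (HR [:: n - 3]); fsimp; apply; adjsolve.
    * apply: (IH2 (ltac:(lia))); move: (HR [:: n - 3; n - 1]); fsimp; apply; adjsolve.
    * apply: (IH3 (ltac:(lia))); move: (HR [:: n - 3; n - 1; n]); fsimp; apply; adjsolve.
  + have [[Ht1 [Ht2 Ht3]] Ht4] := rho_ok (Z.of_nat l) (Z.of_nat n) (Z.of_nat c) (Z.of_nat r) (Z.of_nat c')
      HnZ HlZ (ltac:(lia)) (ltac:(lia)) (ltac:(lia)) Ha Hcc' (ltac:(lia)).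
    set t := Z.to_nat (rhoZ (Z.of_nat n) (Z.of_nat r) (Z.of_nat c')).
    have Et : Z.of_nat t = rhoZ (Z.of_nat n) (Z.of_nat r) (Z.of_nat c') by rewrite /t Z2Nat.id; lia.
    have Htc' : t != c'.
      apply/eqP => E; move: Ht3; rewrite -Et E; move/adjZ_false; lia.
    have Hadj' : adjZ (Z.of_nat c') (Z.of_nat t) = false by rewrite Et.
    have Hk' : k < Fn n c' t + (j - 1) * (n - 4 + l) by rewrite /Fn Et; rewrite /Fn in Hk; lia.
    apply: (IHp c' j t Hc'r _ Hadj' Hj Hk'); first lia.
    rewrite -(filter_nseqT j Htc'); apply: HR.
    rewrite /robber_moves all2_nseq; apply/orP; right; rewrite /adjB Et Ht2 andbT; bsplit; lia.
-
  move=> Hk /= [//|[c' Hc' HR]].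
  case/and3P: Hc' => _ Hc'r /Zadj_cases_nat Hcase.
  have [F8 [F7 [F5 [F31 [F13 [F02 [F82 [F72 F42]]]]]]]] := Fn_spec Hn Hl.
  have Hs3 : forall c2, (c2 = n - 8 \/ c2 = n - 7 \/ c2 = n - 5) -> c' = c2 -> False.
    move=> c2 Hc2 Ec'; subst c'.
    have Hlt : k < Fn n c2 n + (3 - 1) * (n - 4 + l) by case: Hc2 => [->|[->|->]]; lia.
    have Hna : adjZ (Z.of_nat c2) (Z.of_nat n) = false by apply/adjZ_false; lia.
    apply: (IHp c2 3 n _ _ Hna _ Hlt); try lia.
    move: (HR [:: n; n; n]); fsimp; apply; adjsolve.
  case: Hcase => [E|[E|[E|[E|[E|[E|[E|[[E1 E2]|[E1 E2]]]]]]]]]; try lia.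
  + have Ec : c' = n - 4 by lia. rewrite {}Ec in HR *.
    apply: (IH3 (ltac:(lia))); move: (HR [:: n - 3; n - 1; n]); fsimp; apply; adjsolve.
  + have Ec : c' = n - 3 by lia. rewrite {}Ec in HR *.
    have Hna : adjZ (Z.of_nat (n - 3)) (Z.of_nat (n - 1)) = false by apply/adjZ_false; lia.
    apply: (IHp (n - 3) 2 (n - 1) _ _ Hna); try lia.
    move: (HR [:: n - 1; n - 1]); fsimp; apply; adjsolve.
  + apply: (Hs3 (n - 5)); lia.
  + have Ec : c' = n - 1 by lia. rewrite {}Ec in HR *.
    have Hna : adjZ (Z.of_nat (n - 1)) (Z.of_nat (n - 3)) = false by apply/adjZ_false; lia.
    apply: (IHp (n - 1) 2 (n - 3) _ _ Hna); try lia.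
    move: (HR [:: n - 3; n - 3]); fsimp; apply; adjsolve.
  + apply: (Hs3 (n - 7)); lia.
  + have Ec : c' = n by lia. rewrite {}Ec in HR *.
    have Hna : adjZ (Z.of_nat n) (Z.of_nat (n - 2)) = false by apply/adjZ_false; lia.
    apply: (IHp n 2 (n - 2) _ _ Hna); try lia.
    move: (HR [:: n - 2; n - 2]); fsimp; apply; adjsolve.
  + apply: (Hs3 (n - 8)); lia.
-
  move=> Hk /= [//|[c' Hc' HR]].
  case/and3P: Hc' => _ Hc'r /Zadj_cases_nat Hcase.
  have [F8 [F7 [F5 [F31 [F13 [F02 [F82 [F72 F42]]]]]]]] := Fn_spec Hn Hl.
  case: Hcase => [E|[E|[E|[E|[E|[E|[E|[[E1 E2]|[E1 E2]]]]]]]]]; try lia.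
  + have Ec : c' = n - 4 by lia. rewrite {}Ec in HR *.
    have Hna : adjZ (Z.of_nat (n - 4)) (Z.of_nat (n - 2)) = false by apply/adjZ_false; lia.
    apply: (IHp (n - 4) 2 (n - 2) _ _ Hna); try lia.
    move: (HR [:: n - 2; n - 2]); fsimp; apply; adjsolve.
  + have Ec : c' = n - 3 by lia. rewrite {}Ec in HR *.
    have Hna : adjZ (Z.of_nat (n - 3)) (Z.of_nat (n - 1)) = false by apply/adjZ_false; lia.
    apply: (IHp (n - 3) 1 (n - 1) _ _ Hna); try lia.
    move: (HR [:: n - 1]); fsimp; apply; adjsolve.
  + have Ec : c' = n - 5 by lia. rewrite {}Ec in HR *.
    have Hna : adjZ (Z.of_nat (n - 5)) (Z.of_nat n) = false by apply/adjZ_false; lia.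
    apply: (IHp (n - 5) 2 n _ _ Hna); try lia.
    move: (HR [:: n; n]); fsimp; apply; adjsolve.
  + have Ec : c' = n - 1 by lia. rewrite {}Ec in HR *.
    have Hna : adjZ (Z.of_nat (n - 1)) (Z.of_nat (n - 3)) = false by apply/adjZ_false; lia.
    apply: (IHp (n - 1) 1 (n - 3) _ _ Hna); try lia.
    move: (HR [:: n - 3]); fsimp; apply; adjsolve.
  + have Ec : c' = n - 7 by lia. rewrite {}Ec in HR *.
    have Hna : adjZ (Z.of_nat (n - 7)) (Z.of_nat (n - 2)) = false by apply/adjZ_false; lia.
    apply: (IHp (n - 7) 2 (n - 2) _ _ Hna); try lia.
    move: (HR [:: n - 2; n - 2]); fsimp; apply; adjsolve.
  + have Ec : c' = n by lia. rewrite {}Ec in HR *.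
    have Hna : adjZ (Z.of_nat n) (Z.of_nat (n - 2)) = false by apply/adjZ_false; lia.
    apply: (IHp n 2 (n - 2) _ _ Hna); try lia.
    move: (HR [:: n - 2; n - 2]); fsimp; apply; adjsolve.
  + have Ec : c' = n - 8 by lia. rewrite {}Ec in HR *.
    have Hna : adjZ (Z.of_nat (n - 8)) (Z.of_nat (n - 2)) = false by apply/adjZ_false; lia.
    apply: (IHp (n - 8) 2 (n - 2) _ _ Hna); try lia.
    move: (HR [:: n - 2; n - 2]); fsimp; apply; adjsolve.
- by move=> Hk.
Qed.

Theorem mainTheorem5 (l : nat) (hl : 2 <= l) :
  capt_is (H (4 * l + 2)) 3 (2 * l + 3 * ((4 * l + 2) - 4)).
Proof.
set n := 4 * l + 2.
have Hn : n = 4 * l + 2 by [].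
have HnZ : Z.of_nat n = (4 * Z.of_nat l + 2)%Z by lia.
have HlZ : (2 <= Z.of_nat l)%Z by lia.
have HT : 2 * l + 3 * (n - 4) = (n - 4) + 2 * (l + (n - 4)) by lia.
have n0 : 0 < n by lia.
split.
- exists (Ordinal n0) => R0 HR0.
  apply/transfer; rewrite -filter_lab /= HT.
  apply: (UB (j := 2) Hn hl) => //.
    by rewrite size_filter (leq_trans (count_size _ _)) // size_map HR0.
  split; first lia.
  apply/allP => x; rewrite mem_filter => /andP [Hx /mapP [i Hi Ex]]; subst x.
  have := ltn_ord i; rewrite /lab in Hx * => ?; bsplit; lia.
- move=> j Hj [c0 Hc0].
  have := FZ_start (Z.of_nat l) (Z.of_nat n) (Z.of_nat c0.+1) HnZ HlZ (ltac:(have := ltn_ord c0; lia)).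
  cbv zeta.
  set r0z := (if _ then _ else _).
  move=> [Hr0 [Ha0 Hf0]].
  set r0 := Z.to_nat r0z.
  have Er0 : Z.of_nat r0 = r0z by rewrite /r0 Z2Nat.id; lia.
  have Hc0n := ltn_ord c0.
  have := Hc0 (nseq 3 (insubd c0 r0.-1)) (size_nseq _ _).
  move/transfer; rewrite -filter_lab map_nseq.
  have -> : lab (insubd c0 r0.-1) = r0.
    rewrite /lab val_insubd; have -> : r0.-1 < n by lia. lia.
  rewrite filter_nseqT; last first.
    apply/eqP => E; move: Ha0; rewrite -Er0 E; move/adjZ_false; lia.
  apply: ((LB j Hn hl).1 (c0.+1) 3 r0); first lia; first lia.
  + by rewrite Er0.
  + by [].
  + rewrite /Fn Er0; lia.
Qed.
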